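(* Let $n\in\mathbb{Z}$ and let $\{a_i\}_{i\in\mathbb{Z}}$ be any strictly increasing sequence of integers. Then $$\sum_{i=-\infty}^{\infty}\left(\frac{1}{2|n-a_i|+1}-\frac{1}{2\big(|n-a_i|+(a_i-a_{i-1})\big)+1}\right)\le\frac43.$$ If furthermore $a_i-a_{i-1}\ge 2$ for all $i\in\mathbb{Z}$, then the same sum is at most $1+\frac15+\frac17-\frac19$. *)

(* Defs.v *)
From HB Require Import structures.
From mathcomp Require Import all_boot all_order all_algebra.
From mathcomp Require Import all_classical all_reals.
From mathcomp Require Import ereal esum.
Set Implicit Arguments. Unset Strict Implicit. Unset Printing Implicit Defensive.
Import Order.TTheory GRing.Theory Num.Theory.
Local Open Scope ring_scope.

Definition lemma2_term (R : realType) (n : int) (a : int -> int) (i : int) : R :=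
  1 / (2 * (`|n - a i|)%:~R + 1)
  - 1 / (2 * ((`|n - a i|) + (a i - a (i - 1)))%:~R + 1).

(* Main.v *)
Require Import Defs.
From HB Require Import structures.
From mathcomp Require Import all_boot all_order all_algebra.
From mathcomp Require Import all_classical all_reals.
From mathcomp Require Import ereal esum.
From mathcomp Require Import ring lra zify.
Import Order.TTheory GRing.Theory Num.Theory.
Local Open Scope classical_set_scope.
Local Open Scope ring_scope.

Section S.
Variable R : realType.

Definition ff (z : int) : R := 1 / (2 * z%:~R + 1).

Lemma inv_le (A B : R) : 0 < A -> A <= B -> 1 / B <= 1 / A.
Proof.
move=> hA hAB; have hB : 0 < B by lra.
by rewrite !div1r lef_pV2 ?posrE.
Qed.

Lemma ff_ge0 z : 0 <= z -> 0 <= ff z.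
Proof.
move=> hz; rewrite /ff; have : (0:R) <= z%:~R by rewrite ler0z.
move=> h; apply: divr_ge0; lra.
Qed.

Lemma ff_anti z w : 0 <= z -> z <= w -> ff w <= ff z.
Proof.
move=> hz hzw; rewrite /ff; apply: inv_le.
  have : (0:R) <= z%:~R by rewrite ler0z.
  lra.
have : (z%:~R : R) <= w%:~R by rewrite ler_int.
lra.
Qed.

Lemma ff0 : ff 0 = 1.
Proof. by rewrite /ff /=; field. Qed.
Lemma ff1 : ff 1 = 1/3.
Proof. by rewrite /ff /=; field. Qed.
Lemma ff2 : ff 2 = 1/5.
Proof. by rewrite /ff /=; field. Qed.
Lemma ff3 : ff 3 = 1/7.
Proof. by rewrite /ff /=; field. Qed.

Lemma key_real (D G C : R) : 1 <= C -> C <= G -> G <= D ->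
  1/(2*D+1) - 1/(2*(D+G)+1) <= 1/(2*(D-G+C)+1) - 1/(2*(D+C)+1).
Proof.
move=> h1 h2 h3.
have p1 : 2*D+1 != 0 by rewrite gt_eqF //; lra.
have p2 : 2*(D+G)+1 != 0 by rewrite gt_eqF //; lra.
have p3 : 2*(D-G+C)+1 != 0 by rewrite gt_eqF //; lra.
have p4 : 2*(D+C)+1 != 0 by rewrite gt_eqF //; lra.
have -> : 1/(2*D+1) - 1/(2*(D+G)+1) = (2*G) * ((2*D+1)*(2*(D+G)+1))^-1.
  by field; rewrite p1 p2.
have -> : 1/(2*(D-G+C)+1) - 1/(2*(D+C)+1) = (2*G) * ((2*(D-G+C)+1)*(2*(D+C)+1))^-1.
  by field; rewrite p3 p4.
rewrite ler_pM2l; last lra.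
rewrite lef_pV2 ?posrE; last first.
- apply: mulr_gt0; lra.
- apply: mulr_gt0; lra.
rewrite -subr_ge0.
have -> : (2 * D + 1) * (2 * (D + G) + 1) - (2 * (D - G + C) + 1) * (2 * (D + C) + 1)
  = 4 * ((G - C) * (2 * D + 1 + C)) by ring.
apply: mulr_ge0; first lra.
apply: mulr_ge0; lra.
Qed.

Lemma ff_key (d g c : int) : 1 <= c -> c <= g -> g <= d ->
  ff d - ff (d + g) <= ff (d - g + c) - ff (d + c).
Proof.
move=> h1 h2 h3; rewrite /ff !(intrD, intrN).
apply: key_real.
- by rewrite -(ler_int R) in h1.
- by rewrite ler_int.
- by rewrite ler_int.
Qed.


Lemma tele_interval (t Phi : int -> R) :
  (forall i, t i <= Phi i - Phi (i - 1)) ->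
  forall (M : int) (L : nat),
  \sum_(0 <= k < L) t (M + k%:Z) <= Phi (M + L%:Z - 1) - Phi (M - 1).
Proof.
move=> ht M; elim=> [|L IH].
  by rewrite big_geq // addr0 subrr.
rewrite big_nat_recr //=.
have := ht (M + L%:Z).
have -> : M + (L.+1)%:Z - 1 = M + L%:Z by rewrite -addn1 PoszD; ring.
move: IH; lra.
Qed.

Lemma tele_bound (t Phi : int -> R) (K : R) :
  (forall i, 0 <= t i) ->
  (forall i, t i <= Phi i - Phi (i - 1)) ->
  (forall i, 0 <= Phi i <= K) ->
  forall s : seq int, uniq s -> \sum_(i <- s) t i <= K.
Proof.
move=> t0 ht hP s us.
pose B := (\sum_(i <- s) `|i|)%N.
have hB : forall x, x \in s -> (`|x| <= B)%N.
  rewrite /B; clear B; elim: s {us} => [//|y s IH] x; rewrite in_cons big_cons.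
  case/orP=> [/eqP -> | hx]; first exact: leq_addr.
  by apply: leq_trans (IH _ hx) _; apply: leq_addl.
pose M := - B%:Z; pose L := (2 * B).+1.
pose r := [seq M + k%:Z | k <- iota 0 L].
have ur : uniq r.
  rewrite map_inj_uniq ?iota_uniq // => k1 k2 /addrI; by case.
have sr : {subset s <= r}.
  move=> x xs; have := hB x xs => hx; apply/mapP.
  exists (absz (x + B%:Z)); first by rewrite mem_iota /L; lia.
  rewrite /M; lia.
have -> : \sum_(i <- s) t i = \sum_(i <- r | i \in s) t i.
  rewrite -[RHS]big_filter; apply: perm_big; apply: uniq_perm => //.
    by rewrite filter_uniq.
  by move=> x; rewrite mem_filter; case xs: (x \in s) => //=; rewrite sr.
have HH : \sum_(i <- r | i \in s) t i <= \sum_(i <- r) t i.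
  rewrite [X in X <= _]big_mkcond /=; apply: ler_sum => i _; case: ifP => // _.
apply: le_trans HH _.
rewrite /r big_map -/(index_iota 0 L).
have HT := tele_interval t Phi ht M L.
have := hP (M + L%:Z - 1); have := hP (M - 1).
move: HT; lra.
Qed.

Definition Phi (n : int) (a : int -> int) (c : int) (K : R) (i : int) : R :=
  if a i < n then ff (n - a i) else K - ff (a i - n + c).

Lemma term_eq n a i : lemma2_term R n a i =
  ff `|n - a i| - ff (`|n - a i| + (a i - a (i - 1))).
Proof. by []. Qed.

Lemma term_ge0 n a (ha : forall i j : int, i < j -> a i < a j) i :
  0 <= lemma2_term R n a i.
Proof.
rewrite term_eq subr_ge0; apply: ff_anti => //.
have := ha (i - 1) i; lia.
Qed.

Lemma Phi_bd n a c K : 0 <= c -> 1 <= K -> forall i, 0 <= Phi n a c K i <= K.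
Proof.
move=> hc hK i; rewrite /Phi; case: ifP => hi.
  have h0 := ff_ge0 (n - a i) ltac:(lia).
  have h1 := ff_anti (0) (n - a i) ltac:(lia) ltac:(lia).
  move: h1; rewrite ff0; lra.
have h0 := ff_ge0 (a i - n + c) ltac:(lia).
have h1 := ff_anti (0) (a i - n + c) ltac:(lia) ltac:(lia).
move: h1; rewrite ff0; lra.
Qed.

Lemma step n a c K (ha : forall i j : int, i < j -> a i < a j) (hc : 1 <= c)
  (hg : forall i, c <= a i - a (i - 1))
  (h3 : forall x y : int, 0 <= x -> 1 <= y -> c <= x + y ->
        ff x - ff (x + (x + y)) <= K - ff (x + c) - ff y) i :
  lemma2_term R n a i <= Phi n a c K i - Phi n a c K (i - 1).
Proof.
have hlt : a (i - 1) < a i by apply: ha; lia.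
have hgi := hg i.
rewrite term_eq /Phi.
case: (ltP (a i) n) => hi.
  have hi1 : a (i - 1) < n by lia.
  rewrite hi1 ger0_norm; last lia.
  have -> : n - a i + (a i - a (i - 1)) = n - a (i - 1) by ring.
  by [].
rewrite distrC ger0_norm; last lia.
case: (ltP (a (i - 1)) n) => hi1.
  have := h3 (a i - n) (n - a (i - 1)) ltac:(lia) ltac:(lia) ltac:(lia).
  have -> : a i - n + (a i - n + (n - a (i - 1))) = a i - n + (a i - a (i - 1)) by ring.
  lra.
have := ff_key (a i - n) (a i - a (i - 1)) (c) hc hgi ltac:(lia).
have -> : a i - n - (a i - a (i - 1)) + c = a (i - 1) - n + c by ring.
lra.
Qed.

Lemma case3_1 (x y : int) : 0 <= x -> 1 <= y -> 1 <= x + y ->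
  ff x - ff (x + (x + y)) <= 4 / 3 - ff (x + 1) - ff y.
Proof.
move=> hx hy _.
have [->|hx1] : x = 0 \/ 1 <= x by lia.
  rewrite !add0r ff0 ff1; lra.
have h1 := ff_anti (1) (x) ltac:(lia) hx1.
have h2 := ff_anti (1) (y) ltac:(lia) hy.
have h3 := ff_anti (1) (x + 1) ltac:(lia) ltac:(lia).
have h4 := ff_ge0 (x + (x + y)) ltac:(lia).
move: h1 h2 h3; rewrite ff1; lra.
Qed.

Lemma case3_2 (x y : int) : 0 <= x -> 1 <= y -> 2 <= x + y ->
  ff x - ff (x + (x + y)) <= (1 + 1 / 5 + 1 / 7 - 1 / 9) - ff (x + 2) - ff y.
Proof.
move=> hx hy hxy.
have [->|hx1] : x = 0 \/ 1 <= x by lia.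
  rewrite !add0r ff0 ff2; lra.
have h1 := ff_anti (1) (x) ltac:(lia) hx1.
have h2 := ff_anti (1) (y) ltac:(lia) hy.
have h3 := ff_anti (3) (x + 2) ltac:(lia) ltac:(lia).
have h4 := ff_ge0 (x + (x + y)) ltac:(lia).
move: h1 h2 h3; rewrite ff1 ff3; lra.
Qed.

End S.


Lemma esum_bd (R : realType) n a c (K : R)
  (ha : forall i j : int, i < j -> a i < a j) (hc : 1 <= c) (hK : 1 <= K)
  (hg : forall i, c <= a i - a (i - 1))
  (h3 : forall x y : int, 0 <= x -> 1 <= y -> c <= x + y ->
        ff R x - ff R (x + (x + y)) <= K - ff R (x + c) - ff R y) :
  (\esum_(i in [set: int]) (lemma2_term R n a i)%:E <= K%:E)%E.
Proof.
apply: ge_ereal_sup => _ [A [finA _] <-].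
rewrite fsbig_finite //= sumEFin lee_fin.
apply: (@tele_bound R (fun i => lemma2_term R n a i) (Phi R n a c K)).
- exact: term_ge0.
- exact: step.
- apply: Phi_bd => //; lia.
- exact: finmap.fset_uniq.
Qed.

Theorem lemma2 (R : realType) (n : int) (a : int -> int)
  (ha : forall i j : int, i < j -> a i < a j) :
  (\esum_(i in [set: int]) (lemma2_term R n a i)%:E <= (4 / 3 : R)%:E)%E /\
  ((forall i : int, 2 <= a i - a (i - 1)) ->
   (\esum_(i in [set: int]) (lemma2_term R n a i)%:E
      <= (1 + 1 / 5 + 1 / 7 - 1 / 9 : R)%:E)%E).
Proof.
split.
  apply: (@esum_bd R n a 1) => //; first lra.
  - move=> i; have := ha (i - 1) i; lia.
  - exact: case3_1.
move=> hg; apply: (@esum_bd R n a 2) => //; first lra.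
exact: case3_2.
Qed.
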